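(* Let $L$ be a $2$-locally-differing $k$-dimensional $l$-assignment on a simplicial complex $X$, and let $\sigma_1,\sigma_2\in X(k)$ with $|\sigma_1\cap\sigma_2|=|\sigma_1|-1$. Then there is at most one permutation $\pi$ of $[l]$ such that $L^{\sigma_1}_i(v)=L^{\sigma_2}_{\pi(i)}(v)$ for every $v\in\sigma_1\cap\sigma_2$ and every $i\in[l]$.
   Context: $X(k)$ = faces with $k+1$ elements. A $k$-dimensional $l$-assignment is $L=(L^\sigma_i)_{\sigma\in X(k),i\in[l]}$ with $L^\sigma_i:\sigma\to\{0,1\}$. It is $2$-locally-differing if for every $\sigma\in X(k)$ and $i\ne j$ there exist two distinct vertices $x_1\ne x_2$ of $\sigma$ with $L^\sigma_i(x_t)\neq L^\sigma_j(x_t)$ for $t=1,2$. *)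

(* Defs.v *)
From mathcomp Require Import all_boot all_fingroup.
Set Implicit Arguments. Unset Strict Implicit. Unset Printing Implicit Defensive.

Definition simplicial_complex (V : finType) (X : {set {set V}}) : Prop :=
  forall s t : {set V}, s \in X -> t \subset s -> t \in X.

Definition faces (V : finType) (X : {set {set V}}) (k : nat) : {set {set V}} :=
  [set s in X | #|s| == k.+1].

(* A k-dimensional l-assignment: for each face sigma and i in [l], a labelling
   L sigma i : V -> bool, of which only the restriction to sigma matters. *)
Definition assignment (V : finType) (l : nat) := {set V} -> 'I_l -> V -> bool.

Definition two_locally_differing (V : finType) (X : {set {set V}}) (k l : nat)
    (L : assignment V l) : Prop :=
  forall sigma, sigma \in faces X k ->
  forall i j : 'I_l, i != j ->
  exists x1 x2 : V, [/\ x1 \in sigma, x2 \in sigma, x1 != x2,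
      L sigma i x1 != L sigma j x1 & L sigma i x2 != L sigma j x2].

(* Main.v *)
Require Import Defs.
From mathcomp Require Import all_boot all_fingroup.

Theorem mainTheorem7 (V : finType) (X : {set {set V}}) (k l : nat)
    (L : assignment V l) (sigma1 sigma2 : {set V}) :
  simplicial_complex X ->
  two_locally_differing X k L ->
  sigma1 \in faces X k -> sigma2 \in faces X k ->
  #|sigma1 :&: sigma2| = #|sigma1| - 1 ->
  forall pi1 pi2 : {perm 'I_l},
    (forall (i : 'I_l) (v : V), v \in sigma1 :&: sigma2 ->
        L sigma1 i v = L sigma2 (pi1 i) v) ->
    (forall (i : 'I_l) (v : V), v \in sigma1 :&: sigma2 ->
        L sigma1 i v = L sigma2 (pi2 i) v) ->
    pi1 = pi2.
Proof.
move=> _ H2 F1 F2 Hc pi1 pi2 E1 E2.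
apply/permP => i; apply/eqP; apply/negPn/negP => Hne.
have [x1 [x2 [X1 X2 Nx Dx1 Dx2]]] := H2 _ F2 _ _ Hne.
move: F1 F2; rewrite !inE => /andP[_ /eqP C1] /andP[_ /eqP C2].
have out : forall x, x \in sigma2 -> L sigma2 (pi1 i) x != L sigma2 (pi2 i) x ->
  x \in sigma2 :\: sigma1.
  move=> x Hx; rewrite inE Hx andbT; apply: contra => Hx1.
  have Hi : x \in sigma1 :&: sigma2 by rewrite inE Hx1 Hx.
  by rewrite -E1 // -E2.
have Y1 := out _ X1 Dx1; have Y2 := out _ X2 Dx2.
have Hcard : #|sigma2 :\: sigma1| <= 1.
  by rewrite cardsD setIC Hc C1 C2 subSS subn0 subSnn.
have /card_le1P := Hcard.
move=> /(_ _ Y1 x2); rewrite Y2 inE => /esym/eqP E; by rewrite E eqxx in Nx.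
Qed.
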